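(* Let $A$ be a finite group of order $n\geq 2$. The number of subsets $S\subseteq A$ for which there exist subgroups $H,K$ of $A$ with $1<H\leq K<A$ such that $S\setminus K$ is a union of left $H$-cosets is at most $2^{3n/4+2(\log_2 n)^2}$. The same bound holds with right $H$-cosets in place of left $H$-cosets. *)

(* Defs.v *)
From HB Require Import structures.
From mathcomp Require Import all_boot all_order all_fingroup.
From Stdlib Require Import Reals.
Set Implicit Arguments. Unset Strict Implicit. Unset Printing Implicit Defensive.

Import GroupScope.

Definition union_lcosets (gT : finGroupType) (A H : {set gT}) (X : {set gT}) : bool :=
  [exists Cs : {set {set gT}}, (Cs \subset lcosets H A) && (X == cover Cs)].

Definition union_rcosets (gT : finGroupType) (A H : {set gT}) (X : {set gT}) : bool :=
  [exists Cs : {set {set gT}}, (Cs \subset rcosets H A) && (X == cover Cs)].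

Definition lgood (gT : finGroupType) (A : {group gT}) (S : {set gT}) : bool :=
  [exists H : {group gT}, exists K : {group gT},
     [&& (1%G : {group gT}) \proper H, H \subset K, K \proper A
       & union_lcosets A H (S :\: K)]].

Definition rgood (gT : finGroupType) (A : {group gT}) (S : {set gT}) : bool :=
  [exists H : {group gT}, exists K : {group gT},
     [&& (1%G : {group gT}) \proper H, H \subset K, K \proper A
       & union_rcosets A H (S :\: K)]].

Definition log2 (x : R) : R := (ln x / ln 2)%R.

Definition coset_bound (n : nat) : R :=
  Rpower 2 (3 * INR n / 4 + 2 * (log2 (INR n)) ^ 2)%R.

(* Main.v *)
Require Import Defs.
From HB Require Import structures.
From mathcomp Require Import all_boot all_order all_fingroup.
From Stdlib Require Import Reals.
From mathcomp Require Import zify.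
From Stdlib Require Import Lra Psatz.
Set Implicit Arguments. Unset Strict Implicit. Unset Printing Implicit Defensive.
Import GroupScope.

Lemma gen_small (gT : finGroupType) (K L : {group gT}) : L \subset K ->
  exists s : seq gT, [/\ {subset s <= K}, K \subset <<L :|: [set x in s]>>
                       & (expn 2 (size s) * #|L| <= #|K|)%N].
Proof.
move=> sLK; move: {2}(#|K| - #|L|)%N (leqnn (#|K| - #|L|)%N) => d.
elim: d L sLK => [|d IH] L sLK hd.
  exists [::]; split => //.
    have /eqP <- : (L : {set gT}) == K by rewrite eqEcard sLK /=; move: hd; rewrite leqn0 subn_eq0.
    exact: (subset_trans (subsetUl L _) (sub_gen _)).
  by rewrite /= mul1n subset_leq_card.
have [eLK|pLK] := eqVproper sLK.
  exists [::]; split => //.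
    by rewrite -eLK; exact: (subset_trans (subsetUl L _) (sub_gen _)).
  by rewrite /= mul1n eLK.
case/properP: pLK => _ [x xK xL].
set L' := (<<L :|: [set x]>>)%G.
have sL'K : L' \subset K by rewrite gen_subG subUset sLK sub1set xK.
have sLL' : L \subset L' by exact: (subset_trans (subsetUl L _) (sub_gen _)).
have xL' : x \in L' by apply: mem_gen; rewrite !inE eqxx orbT.
have pLL' : L \proper L' by apply/properP; split => //; exists x.
have c1 := proper_card pLL'.
have c2 := subset_leq_card sL'K.
have [k hk] := dvdnP (cardSg sLL').
have c3 : (2 * #|L| <= #|L'|)%N.
  rewrite hk; rewrite hk in c1.
  have hk2 : (1 < k)%N by case: k {hk} c1 => [|[|k]] //=; rewrite ?mul0n ?mul1n ?ltnn.
  by rewrite leq_mul2r hk2 orbT.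
have [s' [s'K gK sz]] := IH L' sL'K ltac:(lia).
exists (x :: s'); split.
- by move=> y; rewrite inE => /orP [/eqP -> //|]; apply: s'K.
- apply: subset_trans gK _; rewrite gen_subG subUset; apply/andP; split.
    by rewrite genS // setUS // sub1set !inE eqxx.
  have h1 : [set y in s'] \subset [set y in x :: s'].
    by apply/subsetP => y; rewrite !inE => ys; rewrite ys orbT.
  exact: (subset_trans (subset_trans h1 (subsetUr L _)) (sub_gen _)).
- rewrite (_ : size (x :: s') = (size s').+1) // expnS mulnC mulnA; apply: leq_trans sz; rewrite mulnC leq_mul2l mulnC c3 orbT //.
Qed.

Definition Kf (gT : finGroupType) m (f : {ffun 'I_m -> gT}) : {set gT} :=
  <<[set f i | i : 'I_m]>>.

Lemma sub_rep (gT : finGroupType) (A K : {group gT}) : K \subset A ->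
  exists2 f : {ffun 'I_(trunc_log 2 #|A|) -> gT}, f \in ffun_on A & Kf f = K.
Proof.
move=> sKA; have [s [sK gK sz]] := gen_small (sub1G K).
set m := trunc_log 2 #|A|.
have szm : (size s <= m)%N.
  apply: trunc_log_max => //; apply: leq_trans (subset_leq_card sKA).
  by apply: leq_trans sz; rewrite cards1 muln1.
have nK : forall i, nth 1 s i \in K.
  move=> i; case: (ltnP i (size s)) => hi; first by apply: sK; rewrite mem_nth.
  by rewrite nth_default.
exists [ffun i : 'I_m => nth 1 s i].
  by apply/ffun_onP => i; rewrite ffunE; apply: (subsetP sKA).
apply/eqP; rewrite eqEsubset; apply/andP; split.
  by rewrite gen_subG; apply/subsetP => y /imsetP [i _ ->]; rewrite ffunE.
apply: subset_trans gK _; rewrite gen_subG subUset sub1G /=.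
apply/subsetP => y; rewrite inE => ys.
have hi : (index y s < m)%N by apply: leq_trans szm; rewrite index_mem.
apply: mem_gen; apply/imsetP; exists (Ordinal hi) => //.
by rewrite ffunE /= nth_index.
Qed.

Lemma P_card (gT : finGroupType) (A K : {set gT}) (c : gT -> {set gT}) d :
  (forall x, #|c x| = d) -> trivIset (c @: A) ->
  (#|[set C in c @: A | C \subset A :\: K]| * d <= #|A :\: K|)%N.
Proof.
move=> cd triv; set P := [set C in c @: A | C \subset A :\: K].
have tP : trivIset P by apply: trivIsetS triv; apply/subsetP => C; rewrite inE => /andP [].
have e : #|cover P| = muln #|P| d.
  rewrite -(eqP tP) (eq_bigr (fun _ => d)); first by rewrite sum_nat_const.
  by move=> C; rewrite inE => /andP [/imsetP [x _ ->] _]; exact: cd.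
rewrite -e; apply: subset_leq_card; apply/bigcupsP => C; rewrite inE => /andP [] //.
Qed.

Lemma fam_card (gT : finGroupType) (A K : {set gT}) (c : gT -> {set gT})
    (G : {set {set gT}}) :
  (forall x, x \in c x) ->
  (forall S, S \in G -> (S \subset A) && [forall x in S :\: K, c x \subset S :\: K]) ->
  (#|G| <= expn 2 (#|K| + #|[set C in c @: A | C \subset A :\: K]|))%N.
Proof.
move=> cx hG; set P := [set C in c @: A | C \subset A :\: K].
pose f (p : {set gT} * {set {set gT}}) := p.1 :|: cover p.2.
have sub : G \subset f @: setX (powerset K) (powerset P).
  apply/subsetP => S SG; have /andP [SA /forallP cl] := hG S SG.
  apply/imsetP; exists (S :&: K, [set C in P | C \subset S]).
    rewrite inE /= !powersetE subsetIr /=.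
    by apply/subsetP => C; rewrite inE => /andP [].
  rewrite /f /=; apply/eqP; rewrite eqEsubset; apply/andP; split.
    apply/subsetP => y yS; case yK: (y \in K).
      by rewrite !inE yS yK.
    have ySK : y \in S :\: K by rewrite inE yK yS.
    have := cl y; rewrite ySK /= => cyS.
    apply/setUP; right; apply/bigcupP; exists (c y) => //.
    rewrite !inE (subset_trans cyS (subsetDl S K)) andbT.
    rewrite (subset_trans cyS (setSD K SA)) andbT.
    by apply: imset_f; apply: (subsetP SA).
  rewrite subUset subsetIl /=; apply/bigcupsP => C; rewrite inE => /andP [_ ->] //.
apply: leq_trans (subset_leq_card sub) _; apply: leq_trans (leq_imset_card _ _) _.
by rewrite cardsX !card_powerset expnD.
Qed.

Lemma card_bigcup_le (T I : finType) (P : {set I}) (F : I -> {set T}) :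
  (#|\bigcup_(i in P) F i| <= \sum_(i in P) #|F i|)%N.
Proof.
apply: (big_rec2 (fun (U : {set T}) (s : nat) => is_true (#|U| <= s)%N)) => [|i U s _ h]; first by rewrite cards0.
rewrite cardsU; apply: leq_trans (leq_subr _ _) _; by rewrite leq_add2l.
Qed.

Lemma main_count (gT : finGroupType) (A : {group gT}) (c : gT -> gT -> {set gT})
    (G : {set {set gT}}) :
  (forall a x, x \in c a x) -> (forall a x, #|c a x| = #[a]) ->
  (forall a, trivIset (c a @: A)) ->
  (forall S, S \in G -> (S \subset A) /\ exists a, exists K : {group gT},
       [/\ a \in A, a != 1, K \proper A & [forall x in S :\: K, c a x \subset S :\: K]]) ->
  (#|G| <= muln (expn #|A| (trunc_log 2 #|A|).+1) (expn 2 (divn (muln 3 #|A|) 4)))%N.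
Proof.
move=> cx cd ctriv hG.
set m := trunc_log 2 #|A|; set k := divn (muln 3 #|A|) 4.
pose I := setX A [set f : {ffun 'I_m -> gT} | f \in ffun_on A].
pose F (p : gT * {ffun 'I_m -> gT}) := [set S in G | [&& p.1 != 1, Kf p.2 \proper A,
   S \subset A & [forall x in S :\: Kf p.2, c p.1 x \subset S :\: Kf p.2]]].
have sub : G \subset \bigcup_(p in I) F p.
  apply/subsetP => S SG; have [SA [a [K [aA a1 pKA cl]]]] := hG S SG.
  have [f fA eK] := sub_rep (proper_sub pKA).
  apply/bigcupP; exists (a, f); first by rewrite !inE /= aA; exact: fA.
  by rewrite !inE SG /= a1 eK pKA SA.
apply: leq_trans (subset_leq_card sub) _.
apply: leq_trans (card_bigcup_le _ _) _.
have cI : #|I| = expn #|A| m.+1 by rewrite cardsX cardsE card_ffun_on card_ord expnS.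
rewrite -cI -sum_nat_const; apply: leq_sum => [[a f]] _ /=.
case: (boolP ((a != 1) && (Kf f \proper A))) => [/andP [a1 pKA]|hb]; last first.
  rewrite (_ : F (a, f) = set0) ?cards0 //; apply/setP => S; rewrite !inE /=.
  by case: (a != 1) hb => //=; case: (Kf f \proper A) => //=; rewrite andbF.
set K := Kf f.
have hF := @fam_card gT A K (c a) (F (a, f)) (cx a) ltac:(by move=> S; rewrite !inE => /and3P [_ _ /andP []]).
apply: leq_trans hF _; rewrite leq_pexp2l //.
have hP := @P_card gT A K (c a) #[a] (cd a) (ctriv a).
have d2 : (1 < #[a])%N by rewrite order_gt1.
set p := #|_| in hP *.
have hp2 : (muln p 2 <= #|A :\: K|)%N by apply: leq_trans hP; rewrite leq_mul2l d2 orbT.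
have sKA := proper_sub pKA.
have eD : #|A :\: K| = (#|A| - #|K|)%N by rewrite cardsD (setIidPr sKA).
have hK : (muln 2 #|K| <= #|A|)%N.
  have [j hj] := dvdnP (cardSg (G:=A) (H:=<<[set f i | i : 'I_m]>>%G) sKA).
  have c1 := proper_card pKA.
  rewrite /K /Kf in c1 *; rewrite hj in c1 *.
  have hj2 : (1 < j)%N by case: j {hj} c1 => [|[|j]] //=; rewrite ?mul0n ?mul1n ?ltnn.
  by apply: leq_mul.
rewrite /k; lia.
Qed.

Lemma triv_l (gT : finGroupType) (H : {group gT}) (B : {set gT}) :
  trivIset ((fun x => x *: H) @: B).
Proof.
apply/trivIsetP => C D /imsetP [x _ ->] /imsetP [y _ ->] neq.
rewrite -setI_eq0; move: neq; apply: contraNT => /set0Pn [z /setIP [zx zy]].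
by rewrite -(lcoset_eqP zx) -(lcoset_eqP zy).
Qed.

Lemma triv_r (gT : finGroupType) (H : {group gT}) (B : {set gT}) :
  trivIset ((fun x => H :* x) @: B).
Proof.
apply/trivIsetP => C D /imsetP [x _ ->] /imsetP [y _ ->] neq.
rewrite -setI_eq0; move: neq; apply: contraNT => /set0Pn [z /setIP [zx zy]].
by rewrite -(rcoset_eqP zx) -(rcoset_eqP zy).
Qed.

Lemma lgood_cond (gT : finGroupType) (A : {group gT}) S : lgood A S ->
  exists a, exists K : {group gT}, [/\ a \in A, a != 1, K \proper A
     & [forall x in S :\: K, x *: <[a]> \subset S :\: K]].
Proof.
move=> /existsP [H /existsP [K /and4P [p1H sHK pKA /existsP [Cs /andP [sCs /eqP eSK]]]]].
case/properP: p1H => _ [a aH a1].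
have aA : a \in A := subsetP (proper_sub pKA) a (subsetP sHK a aH).
exists a, K; split => //.
  by move: a1; rewrite inE.
apply/forallP => x; apply/implyP => xS.
have : x \in cover Cs by rewrite -eSK.
case/bigcupP => C CCs xC.
have /lcosetsP [y _ eC] := subsetP sCs C CCs.
rewrite eC in xC; have ex : x *: H = y *: H := lcoset_eqP xC.
have h1 : x *: <[a]> \subset x *: H by rewrite lcosetS cycle_subG.
apply: subset_trans h1 _.
rewrite ex -eC eSK; apply/subsetP => z zC; apply/bigcupP; exists C => //.
Qed.

Lemma rgood_cond (gT : finGroupType) (A : {group gT}) S : rgood A S ->
  exists a, exists K : {group gT}, [/\ a \in A, a != 1, K \proper A
     & [forall x in S :\: K, <[a]> :* x \subset S :\: K]].
Proof.
move=> /existsP [H /existsP [K /and4P [p1H sHK pKA /existsP [Cs /andP [sCs /eqP eSK]]]]].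
case/properP: p1H => _ [a aH a1].
have aA : a \in A := subsetP (proper_sub pKA) a (subsetP sHK a aH).
exists a, K; split => //.
  by move: a1; rewrite inE.
apply/forallP => x; apply/implyP => xS.
have : x \in cover Cs by rewrite -eSK.
case/bigcupP => C CCs xC.
have /rcosetsP [y _ eC] := subsetP sCs C CCs.
rewrite eC in xC; have ex : H :* x = H :* y := rcoset_eqP xC.
have h1 : <[a]> :* x \subset H :* x by rewrite rcosetS cycle_subG.
apply: subset_trans h1 _.
rewrite ex -eC eSK; apply/subsetP => z zC; apply/bigcupP; exists C => //.
Qed.

Lemma INR_expn a b : INR (expn a b) = (INR a ^ b)%R.
Proof.
elim: b => [|b IH]; first by rewrite expn0.
by rewrite expnS -multE mult_INR IH.
Qed.

Lemma ln_le' x y : (0 < x)%R -> (x <= y)%R -> (ln x <= ln y)%R.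
Proof.
move=> hx [h|->]; last exact: Rle_refl.
by apply: Rlt_le; apply: ln_increasing.
Qed.

Lemma real_bound n : (2 <= n)%N ->
  (INR (muln (expn n (trunc_log 2 n).+1) (expn 2 (divn (muln 3 n) 4))) <= coset_bound n)%R.
Proof.
move=> hn.
have hm : (expn 2 (trunc_log 2 n) <= n)%N by apply: trunc_logP => //; lia.
have hk : (muln 4 (divn (muln 3 n) 4) <= muln 3 n)%N by lia.
set m := trunc_log 2 n in hm *; set k := divn (muln 3 n) 4 in hk *.
have hmR : (INR (expn 2 m) <= INR n)%R by apply: le_INR; apply/leP.
have hkR : (INR (muln 4 k) <= INR (muln 3 n))%R by apply: le_INR; apply/leP.
rewrite -!multE !mult_INR in hkR.
rewrite INR_expn (_ : INR 2 = 2%R) in hmR; last by simpl; lra.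
have n2 : (2 <= INR n)%R by have := le_INR 2 n (leP hn); simpl; lra.
have l2 : (0 < ln 2)%R by have := ln_lt_2; lra.
have npos : (0 < INR n)%R by lra.
set L := log2 (INR n).
have eL : (L * ln 2 = ln (INR n))%R by rewrite /L /log2; field; lra.
have L1 : (1 <= L)%R.
  have : (ln 2 <= ln (INR n))%R by apply: ln_le'; lra.
  move=> h; rewrite -eL in h; nra.
have mL : (INR m <= L)%R.
  have : (ln (2 ^ m) <= ln (INR n))%R by apply: ln_le' => //; apply: pow_lt; lra.
  rewrite ln_pow; last lra.
  move=> h; rewrite -eL in h; nra.
have enR : INR n = Rpower 2 L by rewrite /Rpower eL exp_ln.
rewrite -multE mult_INR !INR_expn.
rewrite (_ : INR 2 = 2%R); last by simpl; lra.
have h2 : (0 < 2)%R by lra.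
rewrite -(@Rpower_pow m.+1 (INR n) npos) -(@Rpower_pow k 2 h2).
rewrite {1}enR Rpower_mult -Rpower_plus /coset_bound.
apply: Rle_Rpower; first lra.
rewrite -/L S_INR.
have : (L * (INR m + 1) <= L * (L + 1))%R by apply: Rmult_le_compat_l; lra.
simpl in hkR. nra.
Qed.

Theorem lemma5p1 (gT : finGroupType) (A : {group gT}) (hn : (2 <= #|A|)%N) :
  (INR (#|[set S : {set gT} | (S \subset A) && lgood A S]|) <= coset_bound (#|A|))%R /\
  (INR (#|[set S : {set gT} | (S \subset A) && rgood A S]|) <= coset_bound (#|A|))%R.
Proof.
split.
- apply: Rle_trans (real_bound hn); apply: le_INR; apply/leP.
  apply: (@main_count gT A (fun a x => x *: <[a]>)).
  + by move=> a x; exact: lcoset_refl.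
  + by move=> a x; exact: card_lcoset.
  + by move=> a; exact: triv_l.
  + by move=> S; rewrite inE => /andP [SA g]; split => //; exact: lgood_cond.
- apply: Rle_trans (real_bound hn); apply: le_INR; apply/leP.
  apply: (@main_count gT A (fun a x => <[a]> :* x)).
  + by move=> a x; exact: rcoset_refl.
  + by move=> a x; exact: card_rcoset.
  + by move=> a; exact: triv_r.
  + by move=> S; rewrite inE => /andP [SA g]; split => //; exact: rgood_cond.
Qed.
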